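(* Let $K$ be an algebraically closed field, complete with respect to a non-Archimedean norm $|\cdot|$ (possibly trivial), let $R>0$ be real and $K_R:=\{k\in K:|k|\le R\}$. Let $\mathcal{F}$ be an $R$-good filter. For each $B_q(k)\in\mathcal{F}$ define $|\cdot|_{B_q(k)}:\mathcal{A}_{\mathrm{Lin}}\to\mathbb{R}_{\ge0}$ by $|aT-b|_{B_q(k)}:=\max\{|ak-b|,\,|a|\cdot q\}$. Then the map $|aT-b|_{\mathcal{F}}:=\inf_{B_q(k)\in\mathcal{F}}|aT-b|_{B_q(k)}$ defines a bounded $K$-seminorm on $\mathcal{A}_{\mathrm{Lin}}$.
   Context: $\mathcal{A}_{\mathrm{Lin}}:=\{aT-b: a,b\in K\}$. An upper real is a subset $x\subseteq\mathbb{Q}$ (write $x<q$ for $q\in x$) that is upward closed and rounded; the right Dedekind section of a real $r$ is $\{q\in\mathbb{Q}:r<q\}$; $x\le y$ for upper reals means $\{q:y<q\}\subseteq\{q:x<q\}$; the infimum of a family of reals $x_i$ is the upper real $\bigcup_i\{q\in\mathbb{Q}:x_i<q\}$. A $K$-seminorm on $\mathcal{A}_{\mathrm{Lin}}$ is a map $|\cdot|_x$ from $\mathcal{A}_{\mathrm{Lin}}$ to inhabited upper reals $\ge0$ such that for $a\in K$, $f,f'\in\mathcal{A}_{\mathrm{Lin}}$: $|a|_x$ is the right Dedekind section of $|a|$; $|aT|_x=|a|\cdot|T|_x$; $|f+f'|_x\le\max\{|f|_x,|f'|_x\}$. It is bounded if $|aT-b|_x\le$ the right Dedekind section of $\max\{|a|R,|b|\}$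 for all $a,b\in K$. A formal ball is a pair $(k,q)\in K_R\times\mathbb{Q}_{>0}$, written $B_q(k)$, with $B_{q'}(k')\subseteq B_q(k)$ meaning $|k-k'|<q$ and $q'\le q$. A filter of formal balls is an inhabited set $\mathcal{F}$ of formal balls, upward closed under $\subseteq$, such that any two members have a common member of $\mathcal{F}$ contained in both. It is $R$-good if moreover $B_q(k)\in\mathcal{F}$ for all $k\in K_R$ and rationals $q>R$, and whenever $B_q(k)\in\mathcal{F}$ there is $B_{q'}(k')\in\mathcal{F}$ with $q'<q$. *)

(* Defs.v *)
From HB Require Import structures.
From mathcomp Require Import all_boot all_order all_algebra.
From mathcomp Require Import boolp classical_sets reals.
Set Implicit Arguments. Unset Strict Implicit. Unset Printing Implicit Defensive.
Import Order.TTheory GRing.Theory Num.Theory.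
Local Open Scope ring_scope.
Local Open Scope classical_set_scope.

Section Defs.
Variables (RT : realType) (K : fieldType) (nrm : K -> RT).

Definition nonarch_abs : Prop :=
  [/\ forall x, 0 <= nrm x,
      forall x, nrm x = 0 <-> x = 0,
      forall x y, nrm (x * y) = nrm x * nrm y &
      forall x y, nrm (x + y) <= Num.max (nrm x) (nrm y)].

Definition complete_wrt : Prop :=
  forall u : nat -> K,
    (forall e : RT, 0 < e -> exists N, forall m n, (N <= m)%N -> (N <= n)%N ->
       nrm (u m - u n) < e) ->
    exists l : K, forall e : RT, 0 < e -> exists N, forall n, (N <= n)%N ->
       nrm (u n - l) < e.

(** Upper reals: subsets of Q (x < q means q \in x) *)
Definition upper_real (x : set rat) : Prop :=
  (forall q q', x q -> q <= q' -> x q') /\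
  (forall q, x q -> exists2 q', x q' & q' < q).

Definition inhabited_ur (x : set rat) : Prop := exists q, x q.

Definition rsection (r : RT) : set rat := [set q | r < ratr q].

Definition ur_le (x y : set rat) : Prop := y `<=` x.

Definition ur_max (x y : set rat) : set rat := x `&` y.

Definition ur_scale (c : RT) (x : set rat) : set rat :=
  [set q | exists2 p, x p & c * ratr p < ratr q].

(** Elements of A_Lin = {aT - b : a, b in K} are encoded by the pair (a, b);
    [N a b] is the value |aT - b|_x. Sums: (aT-b)+(a'T-b') = (a+a')T-(b+b'),
    the constant a is 0T - (-a), and aT is aT - 0. *)
Definition K_seminorm (N : K -> K -> set rat) : Prop :=
  [/\ forall a b, [/\ upper_real (N a b), inhabited_ur (N a b)
                    & ur_le (rsection 0) (N a b)],
      forall a, N 0 (- a) = rsection (nrm a),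
      forall a, N a 0 = ur_scale (nrm a) (N 1 0) &
      forall a b a' b', ur_le (N (a + a') (b + b')) (ur_max (N a b) (N a' b'))].

Definition bounded_K_seminorm (R : RT) (N : K -> K -> set rat) : Prop :=
  K_seminorm N /\
  forall a b, ur_le (N a b) (rsection (Num.max (nrm a * R) (nrm b))).

(** Formal balls B_q(k) encoded as pairs (k, q) *)
Definition formal_ball (R : RT) (B : K * rat) : Prop :=
  nrm B.1 <= R /\ 0 < B.2.

Definition ball_sub (B' B : K * rat) : Prop :=
  nrm (B.1 - B'.1) < ratr B.2 /\ B'.2 <= B.2.

Definition filter_balls (R : RT) (F : set (K * rat)) : Prop :=
  [/\ F `<=` formal_ball R,
      exists B, F B,
      forall B' B, F B' -> formal_ball R B -> ball_sub B' B -> F B &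
      forall B1 B2, F B1 -> F B2 ->
        exists B3, [/\ F B3, ball_sub B3 B1 & ball_sub B3 B2]].

Definition R_good (R : RT) (F : set (K * rat)) : Prop :=
  [/\ filter_balls R F,
      forall k q, nrm k <= R -> R < ratr q -> F (k, q) &
      forall B, F B -> exists2 B', F B' & B'.2 < B.2].

Definition ball_seminorm (B : K * rat) (a b : K) : RT :=
  Num.max (nrm (a * B.1 - b)) (nrm a * ratr B.2).

(** |aT - b|_F := inf_{B in F} |aT - b|_B  (union of right sections) *)
Definition F_seminorm (F : set (K * rat)) (a b : K) : set rat :=
  [set q | exists2 B, F B & ball_seminorm B a b < ratr q].

End Defs.

(* Main.v *)
Require Import Defs.
From HB Require Import structures.
From mathcomp Require Import all_boot all_order all_algebra.
From mathcomp Require Import boolp classical_sets reals.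
From mathcomp Require Import ring.
Import Order.TTheory GRing.Theory Num.Theory.
Local Open Scope ring_scope.
Local Open Scope classical_set_scope.

Lemma ratr_le (RT : realType) (q q' : rat) : q <= q' -> (ratr q : RT) <= ratr q'.
Proof. by move=> h; rewrite -subr_ge0 -rmorphB ler0q subr_ge0. Qed.

Lemma ratr_ltE (RT : realType) (q q' : rat) : (ratr q : RT) < ratr q' -> q < q'.
Proof. by move=> h; rewrite ltNge; apply/negP => /(@ratr_le RT); rewrite leNgt h. Qed.

Lemma rat_between {RT : realType} {x y : RT} : x < y -> exists q, x < ratr q /\ ratr q < y.
Proof.
move=> /rat_in_itvoo [q]; rewrite in_itv /= => /andP[h1 h2]; by exists q.
Qed.

Lemma rat_above {RT : realType} (x : RT) : exists q, x < ratr q.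
Proof.
have h1 : x < x + 1 by rewrite ltrDl.
by have [q [h _]] := rat_between h1; exists q.
Qed.

Theorem claim2p18 (RT : realType) (K : closedFieldType) (nrm : K -> RT)
  (Hnrm : nonarch_abs nrm) (Hcomplete : complete_wrt nrm)
  (R : RT) (HR : 0 < R) (F : set (K * rat)) (HF : R_good nrm R F) :
  bounded_K_seminorm nrm R (F_seminorm nrm F).
Proof.
case: Hnrm => nge0 n0 nM nD.
case: HF => [[Fb [B0 FB0] Fup Fmeet] Fbig Fsh].
have nr0 : nrm 0 = 0 by apply/n0.
have nr1 : nrm 1 = 1.
  have h1 : nrm 1 != 0 by apply/eqP => /n0/eqP; rewrite oner_eq0.
  have := nM 1 1; rewrite mul1r => e.
  have : nrm 1 * (nrm 1 - 1) = 0 by rewrite mulrBr mulr1 -e subrr.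
  by move/eqP; rewrite mulf_eq0 (negbTE h1) /= subr_eq0 => /eqP.
have nN : forall x, nrm (- x) = nrm x.
  have hm1 : nrm (-1) = 1.
    have := nM (-1) (-1); rewrite mulrNN mulr1 nr1 => /esym h.
    have g := nge0 (-1).
    have : (nrm (-1) - 1) * (nrm (-1) + 1) = 0 by rewrite mulrDr mulrBl h; ring.
    move/eqP; rewrite mulf_eq0 => /orP[/eqP|/eqP]; first by move/eqP; rewrite subr_eq0 => /eqP.
    move=> e; have : 0 < nrm (-1) + 1 by rewrite ltr_wpDl.
    by rewrite e ltxx.
  by move=> x; rewrite -mulN1r nM hm1 mul1r.
have bsge0 : forall B a b, 0 <= ball_seminorm nrm B a b.
  by move=> B a b; rewrite /ball_seminorm le_max nge0.
split; first split.
- move=> a b; split.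
  + split.
    * move=> q q' [B FB h] le; exists B => //; apply: (lt_le_trans h); exact: ratr_le.
    * move=> q [B FB h]; have [q' [h1 h2]] := rat_between h.
      exists q'; first by exists B.
      exact: (@ratr_ltE RT).
  + have [q h] := rat_above (ball_seminorm nrm B0 a b); exists q; by exists B0.
  + move=> q [B FB h]; rewrite /rsection /=; exact: (le_lt_trans (bsge0 B a b) h).
- move=> a; rewrite /F_seminorm /rsection; apply/seteqP; split => q /=.
  + by move=> [B FB]; rewrite /ball_seminorm mul0r sub0r opprK nr0 mul0r (max_idPl (nge0 a)).
  + move=> h; exists B0 => //.
    by rewrite /ball_seminorm mul0r sub0r opprK nr0 mul0r (max_idPl (nge0 a)).
- move=> a; rewrite /F_seminorm /ur_scale; apply/seteqP; split => q /=.
  + move=> [B FB]; rewrite /ball_seminorm subr0 nM -maxr_pMr ?nge0 // => h.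
    set M := Num.max (nrm B.1) (ratr B.2) in h.
    have [a0|a0] := eqVneq (nrm a) 0.
      have [p hp] := rat_above M; exists p; first by exists B => //; rewrite /ball_seminorm mul1r subr0 nr1 mul1r.
      by move: h; rewrite a0 !mul0r.
    have ap : 0 < nrm a by rewrite lt_def a0 nge0.
    have : M < ratr q / nrm a by rewrite ltr_pdivlMr // mulrC.
    move=> /rat_between [p [h1 h2]]; exists p.
      by exists B => //; rewrite /ball_seminorm mul1r subr0 nr1 mul1r.
    by rewrite mulrC -ltr_pdivlMr.
  + move=> [p [B FB h] h2]; exists B => //.
    move: h; rewrite /ball_seminorm mul1r subr0 nr1 mul1r subr0 nM -maxr_pMr ?nge0 // => h.
    apply: le_lt_trans h2; apply: ler_wpM2l; [exact: nge0| exact: ltW].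
- move=> a b a' b' q [[B1 FB1 h1] [B2 FB2 h2]].
  have [B3 [FB3 [s1 t1] [s2 t2]]] := Fmeet _ _ FB1 FB2.
  exists B3 => //.
  move: h1 h2; rewrite /ball_seminorm !gt_max => /andP[h1 h1'] /andP[h2 h2'].
  have d1 : nrm (a * B3.1 - b) < ratr q.
    have -> : a * B3.1 - b = a * (B3.1 - B1.1) + (a * B1.1 - b) by ring.
    apply: le_lt_trans (nD _ _) _; rewrite gt_max h1 andbT nM.
    apply: le_lt_trans h1'; rewrite ler_wpM2l ?nge0 // -nN opprB ltW //.
  have d2 : nrm (a' * B3.1 - b') < ratr q.
    have -> : a' * B3.1 - b' = a' * (B3.1 - B2.1) + (a' * B2.1 - b') by ring.
    apply: le_lt_trans (nD _ _) _; rewrite gt_max h2 andbT nM.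
    apply: le_lt_trans h2'; rewrite ler_wpM2l ?nge0 // -nN opprB ltW //.
  apply/andP; split.
    have -> : (a + a') * B3.1 - (b + b') = (a * B3.1 - b) + (a' * B3.1 - b') by ring.
    by apply: le_lt_trans (nD _ _) _; rewrite gt_max d1 d2.
  apply: le_lt_trans (ler_wpM2r _ (nD a a')) _; first by rewrite ler0q; apply: ltW; case: (Fb _ FB3).
  rewrite maxr_pMl; last by rewrite ler0q; apply: ltW; case: (Fb _ FB3).
  rewrite gt_max; apply/andP; split.
    apply: le_lt_trans h1'; rewrite ler_wpM2l ?nge0 // ratr_le //.
  apply: le_lt_trans h2'; rewrite ler_wpM2l ?nge0 // ratr_le //.
- move=> a b q; rewrite /rsection /= gt_max => /andP[ha hb].
  have [q' [hq'1 hq'2]] : exists q', R < ratr q' /\ nrm a * ratr q' < ratr q.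
    have [a0|a0] := eqVneq (nrm a) 0.
      have [p hp] := rat_above R; exists p; split => //; rewrite a0 mul0r.
      by apply: le_lt_trans hb; apply: nge0.
    have ap : 0 < nrm a by rewrite lt_def a0 nge0.
    have : R < ratr q / nrm a by rewrite ltr_pdivlMr // mulrC.
    move=> /rat_between [p [h1 h2]]; exists p; split => //.
    by rewrite mulrC -ltr_pdivlMr.
  exists (0, q'); first by apply: Fbig => //=; rewrite nr0; apply: ltW.
  by rewrite /ball_seminorm /= mulr0 sub0r nN gt_max hb.
Qed.
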